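(* Let $n\geq 1$ and let $G_n$ be the random labelled graph described in the context, with $i^\star$ the (random) label of the root of $T_2$, accessed only through the oracle $\mathcal{O}$. Let $\lambda$ be a real number such that the $2^{2n}\times 2^{2n}$ matrix $M$ defined from $G_n$ and $\lambda$ (as in the context) has full rank for every realization of $G_n$, and let $e_1$ be the standard unit vector indexed by the all-zero label. Let $\varepsilon>0$ and let $\mathcal{A}$ be a QIC algorithm for Linear Systems that, given $SQ(M)$ and $SQ(e_1)$ and precision $\varepsilon$, makes $T(M,\varepsilon)$ queries to $SQ(M)$ and outputs an index $i$ sampled with probability $\tilde{x}_i^2/\|\tilde{x}\|^2$ for a vector $\tilde{x}$ with $\|\tilde{x}-x\|\leq\varepsilon\|x\|$, where $x=M^{-1}e_1$. Then there is a classical algorithm for the game described in the context that makes at most $T(M,\varepsilon)+1$ queries to $\mathcal{O}$ and wins with probability at least $\tilde{x}_{i^\star}^2/\|\tilde{x}\|^2-2T(M,\varepsilon)2^{-2n}$.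
   Context: The graph $G_n$: take two perfect binary trees $T_1,T_2$, each of height $n$ (so each has $2^n$ leaves). Connect the leaves by a uniformly random alternating cycle: fix a leaf $\ell_1$ of $T_1$, connect it to a uniformly random leaf of $T_2$, connect that to a uniformly random remaining leaf of $T_1$, and so on, always alternating between the trees, finally closing the cycle back to $\ell_1$. The $N=2^{n+2}-2$ nodes receive uniformly random distinct $2n$-bit labels, except the root of $T_1$, which gets the all-zero label. The oracle $\mathcal{O}$: on a $2n$-bit query string $s$, it reports that no node has label $s$, or, if such a node exists, returns the labels of its neighbours. The game is won if $\mathcal{O}$ is ever queried with the label $i^\star$ of the root of $T_2$. The matrix $M$: rows and columns indexed by all $2n$-bit strings; on the $N\times N$ submatrix indexed by labels of nodes of $G_n$ it equals $\lambda I-A$, where $A$ is the adjacency matrix of $G_n$; each row/column indexed by a string that is not a node label has diagonal entry $\sqrt{\lambda^2+3}$ and all other entries $0$. $SQ$ access and QIC algorithms: $SQ(v)$ for a vector $v$ allows querying entries, querying $\|v\|$ (Euclidean norm), and sampling index $i$ with probability $v_i^2/\|v\|^2$; $SQ(M)$ for a matrix allows entry queries and $SQ$ access to every row, every column, the vector of row norms and the vector of column norms. A QIC algorithm for Linear Systems accesses its input only via $SQ(M)$ and $SQ(y)$ and outputs an index sampled with probability $\tilde{x}_i^2/\|\tilde{x}\|^2$ for some $\tilde{x}$ with $\|\tilde{x}-M^{-1}y\|\leq\varepsilon\|M^{-1}y\|$. *)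

(* Defs.v *)
From HB Require Import structures.
From mathcomp Require Import all_boot all_order all_fingroup all_algebra.
From mathcomp Require Import reals.
From Stdlib Require List.
Set Implicit Arguments. Unset Strict Implicit. Unset Printing Implicit Defensive.
Import Order.TTheory GRing.Theory Num.Theory.
Local Open Scope ring_scope.

(* Generic randomized query algorithms (finite decision trees).        *)
(*   Rnd m p k    : internal randomness: pick i : 'I_m with prob. p i  *)
Inductive alg (R : realType) (Q Ans Out : Type) : Type :=
  | Ret (o : Out)
  | Ask (q : Q) (k : Ans -> alg R Q Ans Out)
  | Rnd (m : nat) (p : 'I_m -> R) (k : 'I_m -> alg R Q Ans Out).
Arguments Ret {R Q Ans Out}.
Arguments Ask {R Q Ans Out}.
Arguments Rnd {R Q Ans Out}.

(* An oracle answers a query by a finitely supported distribution of answers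
   (a list of (answer, probability) pairs). *)
Definition oracle (R : realType) (Q Ans : Type) := Q -> seq (Ans * R).

Fixpoint valid_alg (R : realType) Q Ans Out (t : alg R Q Ans Out) : Prop :=
  match t with
  | Ret _ => True
  | Ask _ k => forall a, valid_alg (k a)
  | Rnd m p k => (forall i, 0 <= p i) /\ (\sum_(i < m) p i = 1)
                 /\ (forall i, valid_alg (k i))
  end.

(* Expected value of f(sequence of queries made, output) when running t
   against orc; h is the (reversed) history of queries made so far. *)
Fixpoint expect (R : realType) Q Ans Out (t : alg R Q Ans Out)
    (orc : oracle R Q Ans) (f : seq Q -> Out -> R) (h : seq Q) : R :=
  match t with
  | Ret o => f (rev h) o
  | Ask q k => \sum_(pa <- orc q) pa.2 * expect (k pa.1) orc f (q :: h)
  | Rnd m p k => \sum_(i < m) p i * expect (k i) orc f h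
  end.

(* On every execution of positive probability against orc, t makes at most
   b queries q with cnt q = true. *)
Fixpoint qbound (R : realType) Q Ans Out (t : alg R Q Ans Out)
    (orc : oracle R Q Ans) (cnt : Q -> bool) (b : nat) : Prop :=
  match t with
  | Ret _ => True
  | Ask q k => (if cnt q then is_true (0 < b)%N else True) /\
      (forall pa, List.In pa (orc q) -> 0 < pa.2 ->
         qbound (k pa.1) orc cnt (if cnt q then b.-1 else b))
  | Rnd m p k => forall i, 0 < p i -> qbound (k i) orc cnt b
  end.

(* Labels: 2n-bit strings, identified with 'I_(2^(2n)) via binary      *)
(* expansion; the all-zero string is 0.                                *)
Definition lbl (n : nat) := 'I_(2 ^ (2 * n)).
Lemma lbl_gt0 n : (0 < 2 ^ (2 * n))%N. Proof. by rewrite expn_gt0. Qed.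
Definition lab0 (n : nat) : lbl n := Ordinal (lbl_gt0 n).

(* Nodes: (b, k) with b = false for T_1, true for T_2, and k a heap    *)
(* index 0 .. 2^(n+1)-2 of a perfect binary tree of height n (children *)
(* of k are 2k+1 and 2k+2; root 0; leaves 2^n-1 .. 2^(n+1)-2).          *)
Definition tnode (n : nat) := 'I_(2 ^ n.+1 - 2).+1.
Definition node (n : nat) := (bool * tnode n)%type.
Definition root1 (n : nat) : node n := (false, ord0).
Definition root2 (n : nat) : node n := (true, ord0).

Definition tree_adj (n : nat) (u v : tnode n) : bool :=
  [|| (val v == (val u).*2.+1), (val v == (val u).*2.+2),
      (val u == (val v).*2.+1) | (val u == (val v).*2.+2)].

Definition is_leaf (n : nat) (u : tnode n) : bool := (2 ^ n - 1 <= val u)%N.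
Definition leaf_num (n : nat) (u : tnode n) : nat := (val u - (2 ^ n - 1))%N.

(* The random alternating cycle: a_i := T_1-leaf number (sigma i),
   b_i := T_2-leaf number (tau i), with a_0 = l_1 = T_1-leaf number 0; the
   cycle is a_0 b_0 a_1 b_1 ... a_{m-1} b_{m-1} a_0 (m = 2^n), i.e. edges
   {a_i, b_i} and {b_j, a_{(j+1) mod m}}. *)
Definition cyc_adj (n : nat) (sigma tau : {perm 'I_(2 ^ n)}) (x y : nat) : bool :=
  [exists i : 'I_(2 ^ n), (val (sigma i) == x) && (val (tau i) == y)] ||
  [exists i : 'I_(2 ^ n), [exists j : 'I_(2 ^ n),
      [&& val i == ((val j).+1 %% 2 ^ n)%N, val (sigma i) == x & val (tau j) == y]]].

Definition omega (n : nat) :=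
  ({perm 'I_(2 ^ n)} * {perm 'I_(2 ^ n)} * {ffun node n -> lbl n})%type.
Definition w_sigma n (w : omega n) := w.1.1.
Definition w_tau n (w : omega n) := w.1.2.
Definition w_lab n (w : omega n) := w.2.

(* admissible realizations; the distribution of G_n is uniform on them:
   sigma fixes position 0 (a_0 = l_1), tau arbitrary, labels injective and
   the root of T_1 labelled by the all-zero string. *)
Definition good (n : nat) (w : omega n) : bool :=
  [&& [forall i : 'I_(2 ^ n), (val i == 0%N) ==> (val (w_sigma w i) == 0%N)],
      injectiveb (w_lab w) & w_lab w (root1 n) == lab0 n].

Definition adj (n : nat) (w : omega n) (u v : node n) : bool :=
  ((u.1 == v.1) && tree_adj u.2 v.2) ||
  [&& u.1 != v.1, is_leaf u.2, is_leaf v.2 &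
      (if u.1 then cyc_adj (w_sigma w) (w_tau w) (leaf_num v.2) (leaf_num u.2)
       else cyc_adj (w_sigma w) (w_tau w) (leaf_num u.2) (leaf_num v.2))].

Definition is_label (n : nat) (w : omega n) (s : lbl n) : bool :=
  [exists v, w_lab w v == s].

(* adjacency matrix of G_n in label coordinates *)
Definition adjL (R : realType) (n : nat) (w : omega n) (s t : lbl n) : R :=
  ([exists u, exists v, [&& w_lab w u == s, w_lab w v == t & adj w u v]])%:R.

Definition istar (n : nat) (w : omega n) : lbl n := w_lab w (root2 n).

Definition Mmat (R : realType) (n : nat) (lam : R) (w : omega n) : 'M[R]_(2 ^ (2 * n)) :=
  \matrix_(s, t) (if is_label w s && is_label w t
                  then lam * (s == t)%:R - adjL R w s t
                  else if s == t then Num.sqrt (lam ^+ 2 + 3) else 0).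

Definition e1 (R : realType) (n : nat) : 'cV[R]_(2 ^ (2 * n)) :=
  \col_i (i == lab0 n)%:R.

Definition fnorm (R : realType) (D : nat) (v : 'I_D -> R) : R :=
  Num.sqrt (\sum_(i < D) v i ^+ 2).
Definition vnorm (R : realType) (D : nat) (v : 'cV[R]_D) : R := fnorm (fun i => v i 0).

(* Sample-and-query access SQ(M), SQ(y).                               *)
Inductive sq_query (D : nat) : Type :=
  (* SQ(M): entries *)
  | QM_entry (i j : 'I_D)
  (* SQ(row i of M): (entries via QM_entry), norm, sampling *)
  | QM_row_norm (i : 'I_D) | QM_row_sample (i : 'I_D)
  (* SQ(column j of M) *)
  | QM_col_norm (j : 'I_D) | QM_col_sample (j : 'I_D)
  (* SQ(vector of row norms) *)
  | QM_rnorms_entry (i : 'I_D) | QM_rnorms_norm | QM_rnorms_sample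
  (* SQ(vector of column norms) *)
  | QM_cnorms_entry (j : 'I_D) | QM_cnorms_norm | QM_cnorms_sample
  (* SQ(y) *)
  | Qy_entry (i : 'I_D) | Qy_norm | Qy_sample.

Inductive sq_ans (R : realType) (D : nat) : Type :=
  | AReal (r : R)
  | AIdx (i : 'I_D).

(* queries to SQ(M) (these are the ones counted) *)
Definition is_M_query (D : nat) (q : sq_query D) : bool :=
  match q with Qy_entry _ | Qy_norm | Qy_sample => false | _ => true end.

Definition det_ans (R : realType) (D : nat) (r : R) : seq (sq_ans R D * R) :=
  [:: (AReal D r, 1)].
Definition sample_ans (R : realType) (D : nat) (v : 'I_D -> R) : seq (sq_ans R D * R) :=
  [seq (AIdx R i, v i ^+ 2 / fnorm v ^+ 2) | i <- enum 'I_D].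

Definition sq_oracle (R : realType) (D : nat) (M : 'M[R]_D) (y : 'cV[R]_D)
    : oracle R (sq_query D) (sq_ans R D) :=
  let row_i i := fun j => M i j in
  let col_j j := fun i => M i j in
  let rn := fun i => fnorm (row_i i) in
  let cn := fun j => fnorm (col_j j) in
  fun q => match q with
  | QM_entry i j => det_ans D (M i j)
  | QM_row_norm i => det_ans D (rn i)
  | QM_row_sample i => sample_ans (row_i i)
  | QM_col_norm j => det_ans D (cn j)
  | QM_col_sample j => sample_ans (col_j j)
  | QM_rnorms_entry i => det_ans D (rn i)
  | QM_rnorms_norm => det_ans D (fnorm rn)
  | QM_rnorms_sample => sample_ans rn
  | QM_cnorms_entry j => det_ans D (cn j)
  | QM_cnorms_norm => det_ans D (fnorm cn)
  | QM_cnorms_sample => sample_ans cn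
  | Qy_entry i => det_ans D (y i 0)
  | Qy_norm => det_ans D (vnorm y)
  | Qy_sample => sample_ans (fun i => y i 0)
  end.

Definition out_prob (R : realType) (D : nat)
    (A : alg R (sq_query D) (sq_ans R D) 'I_D) (M : 'M[R]_D) (y : 'cV[R]_D)
    (i : 'I_D) : R :=
  expect A (sq_oracle M y) (fun _ o => (o == i)%:R) [::].

Definition game_answer (n : nat) (w : omega n) (s : lbl n) : option {set lbl n} :=
  match [pick v | w_lab w v == s] with
  | Some v => Some [set w_lab w u | u in [pred u | adj w v u]]
  | None => None
  end.

Definition game_oracle (R : realType) (n : nat) (w : omega n)
    : oracle R (lbl n) (option {set lbl n}) :=
  fun s => [:: (game_answer w s, 1)].

Definition avg (R : realType) (n : nat) (F : omega n -> R) : R :=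
  (\sum_(w | good w) F w) / #|[pred w : omega n | good w]|%:R.

(* probability (over G_n and B's coins) that B queries O with i* *)
Definition win_prob (R : realType) (n : nat)
    (B : alg R (lbl n) (option {set lbl n}) unit) : R :=
  avg (fun w => expect B (game_oracle R w) (fun qs _ => (istar w \in qs)%:R) [::]).

(* Main.v *)
Require Import Defs.
From HB Require Import structures.
From mathcomp Require Import all_boot all_order all_fingroup all_algebra.
From mathcomp Require Import reals.
From mathcomp Require Import zify ring lra.
Import Order.TTheory GRing.Theory Num.Theory.
Set Implicit Arguments. Unset Strict Implicit. Unset Printing Implicit Defensive.

Ltac nv := repeat match goal with |- context [@isSub.val_subdef _ _ _ _ ?x] => change (val x) with (nat_of_ord x) end.

Lemma sum_eqx K x : \sum_(k < K) (val k == x) = (x < K).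
Proof.
rewrite -(big_mkord xpredT (fun k => nat_of_bool (k == x))).
elim: K => [|K IH]; first by rewrite big_geq.
rewrite big_nat_recr //= IH; lia.
Qed.

Lemma sum_in_uniq K (s : seq nat) : uniq s ->
  \sum_(k < K) (val k \in s) = count (fun x => x < K) s.
Proof.
elim: s => [|x s IH] /=; first by rewrite big1.
move=> /andP[xs us].
rewrite -IH // -sum_eqx -big_split /=; apply: eq_bigr => k _.
rewrite inE; case: eqP => [->|]; last by [].
by rewrite (negbTE xs).
Qed.

Definition tl (a : nat) : seq nat :=
  [:: a.*2.+1; a.*2.+2] ++ (if (0 < a)%N then [:: (a.-1)./2] else [::]).

Lemma tl_uniq a : uniq (tl a).
Proof.
rewrite /tl; case: ifP => H /=; rewrite !inE; lia.
Qed.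

Lemma tree_adjE n (u v : tnode n) : tree_adj u v = (val v \in tl (val u)).
Proof.
rewrite /tree_adj /tl mem_cat !inE.
have -> : ((val u == (val v).*2.+1) || (val u == (val v).*2.+2)) =
  ((0 < val u) && (val v == (val u).-1./2)).
  apply/idP/idP; first by move=> /orP[]/eqP->; lia.
  move=>/andP[H /eqP ->]; apply/orP; lia.
case: (val u) => [|a] //=; rewrite ?orbF ?inE //.
by rewrite orbA.
Qed.

Lemma ordS_neq m (i : 'I_m) : (1 < m)%N -> ordS i != i.
Proof.
move=> m2; apply/eqP => /(congr1 val) /=.
have im := ltn_ord i.
case: (ltngtP i.+1 m) => H.
- by rewrite modn_small //; lia.
- lia.
- rewrite H modnn => h; lia.
Qed.

Lemma cyc1 n (s t : {perm 'I_(2 ^ n)}) (x0 : 'I_(2 ^ n)) y :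
  cyc_adj s t x0 y =
  (y == t ((s^-1)%g x0)) || (y == t (ord_pred ((s^-1)%g x0))).
Proof.
rewrite /cyc_adj; congr orb.
- apply/existsP/eqP => [[i /andP[/eqP h1 /eqP h2]]|->].
    have e : s i = x0 by apply: val_inj.
    by rewrite -h2 -e permK.
  by exists ((s^-1)%g x0); rewrite permKV !eqxx.
- apply/existsP/eqP => [[i /existsP[j /and3P[/eqP hij /eqP h1 /eqP h2]]]|->].
    have ei : i = ordS j by apply: val_inj.
    have e : s i = x0 by apply: val_inj.
    by rewrite -h2 -e permK ei ordSK.
  exists ((s^-1)%g x0); apply/existsP; exists (ord_pred ((s^-1)%g x0)).
  rewrite permKV !eqxx !andbT.
  by rewrite -[X in val X == _](ord_predK ((s^-1)%g x0)).
Qed.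

Lemma cyc2 n (s t : {perm 'I_(2 ^ n)}) x (y0 : 'I_(2 ^ n)) :
  cyc_adj s t x y0 =
  (x == s ((t^-1)%g y0)) || (x == s (ordS ((t^-1)%g y0))).
Proof.
rewrite /cyc_adj; congr orb.
- apply/existsP/eqP => [[i /andP[/eqP h1 /eqP h2]]|->].
    have e : t i = y0 by apply: val_inj.
    by rewrite -h1 -e permK.
  by exists ((t^-1)%g y0); rewrite permKV !eqxx.
- apply/existsP/eqP => [[i /existsP[j /and3P[/eqP hij /eqP h1 /eqP h2]]]|->].
    have ei : i = ordS j by apply: val_inj.
    have e : t j = y0 by apply: val_inj.
    by rewrite -h1 ei -e permK.
  exists (ordS ((t^-1)%g y0)); apply/existsP; exists ((t^-1)%g y0).
  by rewrite permKV !eqxx !andbT.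
Qed.

Lemma leaf_lt n (k : tnode n) : (leaf_num k < 2 ^ n)%N.
Proof.
have e : (2 ^ n.+1 = 2 * 2 ^ n)%N := expnS 2 n.
have p : (0 < 2 ^ n)%N by rewrite expn_gt0.
have := ltn_ord k; rewrite /leaf_num -[val k]/(nat_of_ord k); lia.
Qed.

Lemma cyc_count n (a b : 'I_(2 ^ n)) : a != b ->
  \sum_(k : tnode n) (is_leaf k && ((leaf_num k == a) || (leaf_num k == b))) = 2%N.
Proof.
move=> ab.
have e : (2 ^ n.+1 = 2 * 2 ^ n)%N := expnS 2 n.
have ha := ltn_ord a; have hb := ltn_ord b.
have ab' : val a != val b by [].
rewrite (eq_bigr (fun k : tnode n => nat_of_bool (val k \in [:: a + (2 ^ n - 1); b + (2 ^ n - 1)])%N)).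
  rewrite sum_in_uniq /=; last by rewrite inE andbT; move: ab'; nv; lia.
  nv; lia.
move=> k _; rewrite !inE /is_leaf /leaf_num; move: ab'; nv; lia.
Qed.

Lemma card_adj n (w : omega n) (v : node n) : (1 <= n)%N ->
  #|[pred u | adj w v u]| = (3 - (val v.2 == 0%N))%N.
Proof.
move=> n1.
have e : (2 ^ n.+1 = 2 * 2 ^ n)%N := expnS 2 n.
have m2 : (2 <= 2 ^ n)%N by rewrite -{1}(expn1 2) leq_pexp2l.
have -> : #|[pred u | adj w v u]| = \sum_(b : bool) \sum_(k : tnode n) adj w v (b, k).
  rewrite pair_bigA -sum1_card big_mkcond; apply: eq_bigr => [[b k]] _ /=.
  by rewrite inE; case: adj.
rewrite big_bool; case: v => bv kv /=.
have Etree : \sum_(k : tnode n) tree_adj kv k = count (fun x => x < (2 ^ n.+1 - 2).+1)%N (tl kv).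
  by rewrite -sum_in_uniq ?tl_uniq //; apply: eq_bigr => k _; rewrite tree_adjE.
have kvK := ltn_ord kv.
case: bv => /=.
- rewrite (eq_bigr (fun k => nat_of_bool (tree_adj kv k))); last by move=> k _; rewrite /adj /= ?eqxx ?andbT ?orbF.
  rewrite Etree.
  case Hl: (is_leaf kv).
  + set y0 : 'I_(2 ^ n) := Ordinal (leaf_lt kv).
    rewrite (eq_bigr (fun k : tnode n => nat_of_bool (is_leaf k && ((leaf_num k == (w_sigma w) (((w_tau w)^-1)%g y0)) || (leaf_num k == (w_sigma w) (ordS (((w_tau w)^-1)%g y0))))))).
      rewrite cyc_count; last by rewrite (inj_eq perm_inj) eq_sym ordS_neq.
      move: Hl; rewrite /tl /is_leaf; case: ifP => /= H; nv; lia.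
    move=> k _; rewrite /adj /= Hl /=.
    by rewrite -cyc2.
  + rewrite big1; last by move=> k _; rewrite /adj /= Hl.
    move: Hl; rewrite /tl /is_leaf; case: ifP => /= H; nv; lia.
- rewrite addnC (eq_bigr (fun k => nat_of_bool (tree_adj kv k))); last by move=> k _; rewrite /adj /= ?eqxx ?andbT ?orbF.
  rewrite Etree.
  case Hl: (is_leaf kv).
  + set x0 : 'I_(2 ^ n) := Ordinal (leaf_lt kv).
    rewrite (eq_bigr (fun k : tnode n => nat_of_bool (is_leaf k && ((leaf_num k == (w_tau w) (((w_sigma w)^-1)%g x0)) || (leaf_num k == (w_tau w) (ord_pred (((w_sigma w)^-1)%g x0))))))).
      rewrite cyc_count; last first.
        rewrite (inj_eq perm_inj); apply/negP => /eqP h.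
        have := ordS_neq (ord_pred (((w_sigma w)^-1)%g x0)) m2.
        by rewrite ord_predK -h eqxx.
      move: Hl; rewrite /tl /is_leaf; case: ifP => /= H; nv; lia.
    move=> k _; rewrite /adj /= Hl /=.
    by rewrite -cyc1.
  + rewrite big1; last by move=> k _; rewrite /adj /= Hl.
    move: Hl; rewrite /tl /is_leaf; case: ifP => /= H; nv; lia.
Qed.

Local Open Scope ring_scope.

Definition validb (R : realType) (A : Type) (L : seq (A * R)) : bool :=
  all (fun pa => 0 <= pa.2) L && (\sum_(pa <- L) pa.2 == 1).

Definition RndL (R : realType) (A BQ BA : Type) (L : seq (A * R)) (d : A)
   (k : A -> alg R BQ BA unit) : alg R BQ BA unit :=
  if validb L then Rnd (size L) (fun j : 'I_(size L) => (nth (d, 0) L j).2)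
                       (fun j => k (nth (d, 0) L j).1)
  else Ret tt.

Definition gvec (R : realType) (lam : R) n (i : lbl n) (a : option {set lbl n}) (j : lbl n) : R :=
  match a with
  | None => if j == i then Num.sqrt (lam ^+ 2 + 3) else 0
  | Some S0 => if j == i then lam else if j \in S0 then -1 else 0
  end.

Definition wf (R : realType) (lam : R) n (s : lbl n) : R :=
  (lam ^+ 2 + 3) - (s == lab0 n)%:R.
Definition Zf (R : realType) (lam : R) n : R := \sum_(s : lbl n) wf lam s.
Definition pf (R : realType) (lam : R) n (s : lbl n) : R := wf lam s / Zf lam n.

Definition Lq (R : realType) (lam : R) n (q : sq_query (2 ^ (2 * n)))
  (a : option {set lbl n}) : seq (sq_ans R (2 ^ (2 * n)) * R) :=
  match q with
  | QM_entry i j => det_ans _ (gvec lam i a j)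
  | QM_row_norm i | QM_col_norm i | QM_rnorms_entry i | QM_cnorms_entry i =>
      det_ans _ (fnorm (gvec lam i a))
  | QM_row_sample i | QM_col_sample i => sample_ans (gvec lam i a)
  | QM_rnorms_norm | QM_cnorms_norm => det_ans _ (Num.sqrt (Zf lam n - 1))
  | _ => [::]
  end.

Definition idx n (q : sq_query (2 ^ (2 * n))) : lbl n :=
  match q with
  | QM_entry i _ | QM_row_norm i | QM_col_norm i | QM_rnorms_entry i
  | QM_cnorms_entry i | QM_row_sample i | QM_col_sample i => i
  | _ => lab0 n
  end.

Fixpoint sim (R : realType) (lam : R) n
  (t : alg R (sq_query (2 ^ (2 * n))) (sq_ans R (2 ^ (2 * n))) (lbl n))
  : alg R (lbl n) (option {set lbl n}) unit :=
  match t with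
  | Ret o => Ask o (fun _ => Ret tt)
  | Rnd m p k => Rnd m p (fun i => sim lam (k i))
  | Ask q k =>
    match q with
    | Qy_entry _ | Qy_norm | Qy_sample =>
        RndL (sq_oracle 0 (e1 R n) q) (AReal _ 0) (fun b => sim lam (k b))
    | QM_rnorms_sample | QM_cnorms_sample =>
        Rnd (2 ^ (2 * n)) (@pf R lam n) (fun s => Ask s (fun _ => sim lam (k (AIdx R s))))
    | _ => Ask (idx q) (fun a => RndL (Lq lam q a) (AReal _ 0) (fun b => sim lam (k b)))
    end
  end.

Definition Fw (R : realType) n (w : omega n) : seq (lbl n) -> unit -> R :=
  fun qs _ => (istar w \in qs)%:R.

Lemma expB_bounds (R : realType) n (w : omega n)
  (t : alg R (lbl n) (option {set lbl n}) unit) h :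
  valid_alg t -> 0 <= expect t (game_oracle R w) (Fw R w) h <= 1.
Proof.
elim: t h => [o|q k IH|m p k IH] h /=.
- by move=> _; rewrite /Fw; case: (_ \in _); rewrite ?ler01 ?lexx.
- by move=> V; rewrite /game_oracle big_seq1 /= mul1r; apply: IH.
- move=> [p0 [ps V]]; apply/andP; split.
    by apply: sumr_ge0 => i _; rewrite mulr_ge0 //; case/andP: (IH i h (V i)).
  rewrite -ps; apply: ler_sum => i _; apply: ler_piMr => //.
  by case/andP: (IH i h (V i)).
Qed.

Lemma expB_one (R : realType) n (w : omega n)
  (t : alg R (lbl n) (option {set lbl n}) unit) h :
  valid_alg t -> istar w \in h -> expect t (game_oracle R w) (Fw R w) h = 1.
Proof.
elim: t h => [o|q k IH|m p k IH] h /=.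
- by move=> _ H; rewrite /Fw mem_rev H.
- move=> V H; rewrite /game_oracle big_seq1 /= mul1r; apply: IH => //.
  by rewrite inE H orbT.
- move=> [p0 [ps V]] H; rewrite -ps; apply: eq_bigr => i _.
  by rewrite IH // mulr1.
Qed.

Lemma In_nth (T : Type) (x0 : T) (s : seq T) j : (j < size s)%N -> List.In (nth x0 s j) s.
Proof.
elim: s j => [|x s IH] [|j] //= H; first by left.
by right; apply: IH.
Qed.

Lemma In_mem (T : eqType) (x : T) (s : seq T) : x \in s -> List.In x s.
Proof.
elim: s => [|y s IH] //=; rewrite inE => /orP[/eqP ->|H]; first by left.
by right; apply: IH.
Qed.

Lemma In_map (T U : Type) (f : T -> U) (x : T) (s : seq T) : List.In x s -> List.In (f x) (map f s).
Proof.
elim: s => [|y s IH] //= [->|H]; first by left.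
by right; apply: IH.
Qed.

Lemma sum_nth (R : realType) (A : Type) (L : seq (A * R)) d (F : A * R -> R) :
  \sum_(pa <- L) F pa = \sum_(j < size L) F (nth (d, 0) L j).
Proof. by rewrite (big_nth (d, 0)) big_mkord. Qed.

Lemma valid_RndL (R : realType) (A BQ BA : Type) (L : seq (A * R)) d
   (k : A -> alg R BQ BA unit) :
  (forall a, valid_alg (k a)) -> valid_alg (RndL L d k).
Proof.
move=> V; rewrite /RndL; case: ifP => // /andP[/(all_nthP (d, 0)) H /eqP S] /=.
split; first by move=> j; apply: H.
by split=> //; rewrite -S (sum_nth _ d).
Qed.

Lemma qbound_RndL (R : realType) (A BQ BA : Type) (L : seq (A * R)) d
   (k : A -> alg R BQ BA unit) (O : oracle R BQ BA) cnt b :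
  (forall pa, List.In pa L -> 0 < pa.2 -> qbound (k pa.1) O cnt b) ->
  qbound (RndL L d k) O cnt b.
Proof.
move=> H; rewrite /RndL; case: ifP => // _ /= j hj.
by apply: H => //; apply: In_nth.
Qed.

Lemma expect_RndL (R : realType) n (w : omega n) (A : Type) (L : seq (A * R)) d
   (k : A -> alg R (lbl n) (option {set lbl n}) unit) (Y : A -> R) h :
  validb L || all (fun pa => pa.2 == 0) L ->
  (forall a, Y a <= expect (k a) (game_oracle R w) (Fw R w) h) ->
  \sum_(pa <- L) pa.2 * Y pa.1 <= expect (RndL L d k) (game_oracle R w) (Fw R w) h.
Proof.
move=> /orP[V|Z] H; rewrite /RndL.
- rewrite V /= (sum_nth _ d); apply: ler_sum => j _.
  case/andP: V => /(all_nthP (d, 0)) V _.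
  by apply: ler_wpM2l; [apply: V | apply: H].
- move/(all_nthP (d, 0)): Z => Z.
  have -> : \sum_(pa <- L) pa.2 * Y pa.1 = 0.
    rewrite (sum_nth _ d); apply: big1 => j _.
    by rewrite (eqP (Z j (ltn_ord j))) mul0r.
  case: ifP => _ /=.
  + apply: sumr_ge0 => j _.
    by rewrite (eqP (Z j (ltn_ord j))) mul0r.
  + by rewrite /Fw; case: (_ \in _).
Qed.

Lemma wf_ge (R : realType) (lam : R) n (s : lbl n) : 2 + lam ^+ 2 <= wf lam s.
Proof. by rewrite /wf; case: (s == lab0 n) => /=; lra. Qed.

Lemma Zf_gt1 (R : realType) (lam : R) n : 1 < Zf lam n.
Proof.
rewrite /Zf (bigD1 (lab0 n)) //=.
have h1 := wf_ge lam (lab0 n).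
have h2 : 0 <= \sum_(i < 2 ^ (2 * n) | i != lab0 n) wf lam i.
  by apply: sumr_ge0 => i _; have := wf_ge lam i; have := sqr_ge0 lam; lra.
have := sqr_ge0 lam; lra.
Qed.

Lemma pf_valid (R : realType) (lam : R) n :
  (forall s : lbl n, 0 <= pf lam s) /\ \sum_(s : lbl n) pf lam s = 1.
Proof.
have Z := Zf_gt1 lam n.
split.
  move=> s; rewrite /pf divr_ge0 //; last by lra.
  by have := wf_ge lam s; have := sqr_ge0 lam; lra.
rewrite /pf -mulr_suml -/(Zf lam n) divff //; lra.
Qed.

Lemma valid_sim (R : realType) (lam : R) n
  (t : alg R (sq_query (2 ^ (2 * n))) (sq_ans R (2 ^ (2 * n))) (lbl n)) :
  valid_alg t -> valid_alg (sim lam t).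
Proof.
elim: t => [o|q k IH|m p k IH] /=.
- by [].
- move=> V.
  case: q => * /=; (try by move=> a; apply: valid_RndL => b; apply: IH);
    (try by apply: valid_RndL => b; apply: IH).
  + case: (pf_valid lam n) => p0 ps; do 2 split => //.
    by move=> s a; apply: IH.
  + case: (pf_valid lam n) => p0 ps; do 2 split => //.
    by move=> s a; apply: IH.
- by move=> [p0 [ps V]]; do 2 split => //; move=> i; apply: IH.
Qed.

Lemma good_inj n (w : omega n) : good w -> injective (w_lab w).
Proof. by case/and3P => _ /injectiveP. Qed.

Lemma good_lab0 n (w : omega n) : good w -> w_lab w (Defs.root1 n) = lab0 n.
Proof. by case/and3P => _ _ /eqP. Qed.

Lemma tree_adj_irr n (k : tnode n) : tree_adj k k = false.
Proof. rewrite /tree_adj; apply/negP; nv; lia. Qed.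

Lemma adj_irr n (w : omega n) u : adj w u u = false.
Proof. by rewrite /adj eqxx tree_adj_irr. Qed.

Lemma tree_adj_sym n (u v : tnode n) : tree_adj u v = tree_adj v u.
Proof. rewrite /tree_adj; apply/idP/idP; nv; lia. Qed.

Lemma adj_sym n (w : omega n) u v : adj w u v = adj w v u.
Proof.
rewrite /adj eq_sym tree_adj_sym; congr orb.
case: u v => [[] ku] [[] kv] //=.
- by rewrite andbCA.
- by rewrite andbCA.
Qed.

Lemma adjL_lab (R : realType) n (w : omega n) v t : good w ->
  adjL R w (w_lab w v) t = (t \in [set w_lab w u | u in [pred u | adj w v u]])%:R.
Proof.
move=> g; rewrite /adjL; congr ((nat_of_bool _)%:R).
apply/idP/idP.
- move=> /existsP[u /existsP[u' /and3P[/eqP e1 /eqP e2 a]]].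
  have e : u = v by apply: (good_inj g).
  by apply/imsetP; exists u'; rewrite // inE -e.
- move=> /imsetP[u' hu' ->]; apply/existsP; exists v; apply/existsP; exists u'.
  by rewrite !eqxx; move: hu'; rewrite inE.
Qed.

Lemma is_label_lab n (w : omega n) v : is_label w (w_lab w v).
Proof. by apply/existsP; exists v. Qed.

Lemma gvec_ok (R : realType) (lam : R) n (w : omega n) i j : good w ->
  gvec lam i (game_answer w i) j = Mmat lam w i j.
Proof.
move=> g; rewrite /game_answer mxE.
case: pickP => [v /eqP Hv | H] /=.
- subst i; rewrite is_label_lab /= adjL_lab //.
  set S := [set _ | _ in _].
  have Sl : forall t, t \in S -> is_label w t.
    by move=> t /imsetP[u _ ->]; apply: is_label_lab.
  have vS : w_lab w v \notin S.
    apply/negP => /imsetP[u hu e].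
    have e' : v = u by apply: (good_inj g).
    by move: hu; rewrite inE -e' adj_irr.
  case: eqP => [->|ne].
    by rewrite is_label_lab eqxx (negbTE vS) mulr1 subr0.
  case L: (is_label w j).
    have : (w_lab w v == j) = false by apply/eqP => e; apply: ne.
    by move=> ->; rewrite mulr0 sub0r; case: (j \in S) => //=; rewrite oppr0.
  have -> : (j \in S) = false by apply/negP => /Sl; rewrite L.
  by case: eqP => // e; case: ne.
- have -> : is_label w i = false.
    by apply/negbTE/existsPn => v; rewrite H.
  by rewrite /= eq_sym.
Qed.

Lemma M_sym (R : realType) (lam : R) n (w : omega n) i j :
  Mmat lam w i j = Mmat lam w j i.
Proof.
rewrite !mxE andbC [j == i]eq_sym; congr (if _ then _ - _ else _).
rewrite /adjL; congr ((nat_of_bool _)%:R); apply/existsP/existsP.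
- move=> [u /existsP[v /and3P[a b c]]]; exists v; apply/existsP; exists u.
  by rewrite a b adj_sym.
- move=> [u /existsP[v /and3P[a b c]]]; exists v; apply/existsP; exists u.
  by rewrite a b adj_sym.
Qed.

Lemma sum_delta (R : realType) (T : finType) (s : T) (f : T -> R) :
  \sum_t (t == s)%:R * f t = f s.
Proof.
rewrite (bigD1 s) //= eqxx mul1r big1 ?addr0 // => t /negbTE ->.
by rewrite mul0r.
Qed.

Lemma sum_card (R : realType) (T : finType) (S : {set T}) :
  \sum_t ((t \in S)%:R : R) = #|S|%:R.
Proof.
rewrite -sumr_const [RHS]big_mkcond /=; apply: eq_bigr => t _.
by case: (t \in S).
Qed.

Lemma lab_notin n (w : omega n) v : good w ->
  w_lab w v \notin [set w_lab w u | u in [pred u | adj w v u]].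
Proof.
move=> g; apply/negP => /imsetP[u hu e].
have e' : v = u by apply: (good_inj g).
by move: hu; rewrite inE -e' adj_irr.
Qed.

Lemma rowsq (R : realType) (lam : R) n (w : omega n) s : (1 <= n)%N -> good w ->
  \sum_t (Mmat lam w s t) ^+ 2 = wf lam s - (s == istar w)%:R.
Proof.
move=> n1 g.
rewrite (eq_bigr (fun t => (gvec lam s (game_answer w s) t) ^+ 2)); last first.
  by move=> t _; rewrite gvec_ok.
rewrite /game_answer; case: pickP => [v /eqP Hv | H] /=.
- subst s; set S := [set _ | _ in _].
  have vS := lab_notin v g.
  rewrite (eq_bigr (fun t => (t == w_lab w v)%:R * lam ^+ 2 + (t \in S)%:R)); last first.
    move=> t _; case: eqP => [->|_]; first by rewrite (negbTE vS) mul1r addr0.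
    by rewrite mul0r add0r; case: (t \in S) => /=; rewrite ?expr0n //= sqrrN expr1n.
  rewrite big_split /= sum_delta sum_card /S card_imset; last exact: good_inj g.
  rewrite card_adj // /wf /istar -(good_lab0 g) !(inj_eq (good_inj g)).
  case: v {vS S} => [b k] /=; rewrite /Defs.root1 /root2 !xpair_eqE /=.
  have -> : (val k == 0%N) = (k == ord0) by [].
  by case: b; case: (k == ord0) => /=; rewrite ?natrB //=; lra.
- rewrite (eq_bigr (fun t => (t == s)%:R * (lam ^+ 2 + 3))); last first.
    move=> t _; case: eqP => _; rewrite ?mul0r ?mul1r ?expr0n //.
    by rewrite sqr_sqrtr //; have := sqr_ge0 lam; lra.
  rewrite sum_delta /wf /istar -(good_lab0 g).
  have -> : (s == w_lab w (Defs.root1 n)) = false by rewrite eq_sym H.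
  have -> : (s == w_lab w (root2 n)) = false by rewrite eq_sym H.
  by rewrite /= !subr0.
Qed.

Lemma det_valid (R : realType) D (r : R) : validb (det_ans D r).
Proof. by rewrite /validb /det_ans /= big_seq1 ler01 eqxx. Qed.

Lemma sum_sample (R : realType) D (v : 'I_D -> R) (Y : sq_ans R D -> R) :
  \sum_(pa <- sample_ans v) pa.2 * Y pa.1 = \sum_i (v i ^+ 2 / fnorm v ^+ 2) * Y (AIdx R i).
Proof. by rewrite /sample_ans big_map big_enum /=. Qed.

Lemma fnorm_sq (R : realType) D (v : 'I_D -> R) : fnorm v ^+ 2 = \sum_i v i ^+ 2.
Proof. by rewrite /fnorm sqr_sqrtr // sumr_ge0 // => i _; rewrite sqr_ge0. Qed.

Lemma sample_valid (R : realType) D (v : 'I_D -> R) :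
  validb (sample_ans v) || all (fun pa => pa.2 == 0) (sample_ans v).
Proof.
case: (fnorm v =P 0) => [z|nz].
- apply/orP; right; rewrite /sample_ans all_map; apply/allP => i _ /=.
  by rewrite z expr0n /= invr0 mulr0.
- apply/orP; left; apply/andP; split.
    rewrite /sample_ans all_map; apply/allP => i _ /=.
    by rewrite divr_ge0 // sqr_ge0.
  have := sum_sample v (fun _ => 1).
  under eq_bigr do rewrite mulr1.
  move=> ->; under eq_bigr do rewrite mulr1.
  rewrite -mulr_suml -fnorm_sq divff //.
  by rewrite expf_neq0 //; apply/eqP.
Qed.

Lemma oracle_valid (R : realType) D (M : 'M[R]_D) y q :
  validb (sq_oracle M y q) || all (fun pa => pa.2 == 0) (sq_oracle M y q).
Proof. by case: q => * /=; rewrite ?det_valid ?sample_valid. Qed.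

Lemma key_ineq (R : realType) D (w X Y : 'I_D -> R) (s0 : 'I_D) :
  (forall i, 0 <= w i) -> (forall i, Y i <= X i) -> (forall i, X i <= 1) ->
  X s0 = 1 -> (forall i, 0 <= w i - (i == s0)%:R) -> 1 < \sum_i w i ->
  \sum_i ((w i - (i == s0)%:R) / (\sum_j w j - 1)) * Y i
    <= \sum_i (w i / \sum_j w j) * X i.
Proof.
move=> w0 YX X1 Xs0 wd Z1.
set Z := \sum_j w j in Z1 *.
set V := \sum_i w i * X i.
have VZ : V <= Z by apply: ler_sum => i _; apply: ler_piMr.
apply: (@le_trans _ _ (\sum_i ((w i - (i == s0)%:R) / (Z - 1)) * X i)).
  apply: ler_sum => i _; apply: ler_wpM2l => //.
  by apply: divr_ge0; [apply: wd | lra].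
have E1 : \sum_i ((w i - (i == s0)%:R) / (Z - 1)) * X i = (V - 1) / (Z - 1).
  under eq_bigr do rewrite mulrAC mulrBl.
  by rewrite -mulr_suml sumrB sum_delta Xs0.
have E2 : \sum_i (w i / Z) * X i = V / Z.
  by under eq_bigr do rewrite mulrAC; rewrite -mulr_suml.
rewrite E1 E2.
have -> : V / Z = (V - 1) / (Z - 1) + (Z - V) / (Z * (Z - 1)).
  by field; apply/andP; split; apply/eqP; lra.
rewrite lerDl; apply: divr_ge0; first lra.
by apply: mulr_ge0; lra.
Qed.

Lemma fnorm_ext (R : realType) D (u v : 'I_D -> R) : (forall i, u i = v i) -> fnorm u = fnorm v.
Proof. by move=> H; rewrite /fnorm; congr Num.sqrt; apply: eq_bigr => i _; rewrite H. Qed.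

Lemma sample_ans_ext (R : realType) D (u v : 'I_D -> R) : (forall i, u i = v i) ->
  sample_ans u = sample_ans v.
Proof.
move=> H; rewrite /sample_ans (fnorm_ext H); apply: eq_map => i.
by rewrite H.
Qed.

Lemma rn_sum (R : realType) (lam : R) n (w : omega n) : (1 <= n)%N -> good w ->
  \sum_(i : lbl n) fnorm (fun j => Mmat lam w i j) ^+ 2 = Zf lam n - 1.
Proof.
move=> n1 g.
under eq_bigr do rewrite fnorm_sq rowsq //.
rewrite sumrB; congr (_ - _).
by have := sum_delta (istar w) (fun _ : lbl n => (1 : R)); under eq_bigr do rewrite mulr1.
Qed.

Lemma rn_norm (R : realType) (lam : R) n (w : omega n) : (1 <= n)%N -> good w ->
  fnorm (fun i : lbl n => fnorm (fun j => Mmat lam w i j)) = Num.sqrt (Zf lam n - 1).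
Proof. by move=> n1 g; rewrite /fnorm -(rn_sum lam n1 g) /fnorm. Qed.


Definition algA (R : realType) n :=
  alg R (sq_query (2 ^ (2 * n))) (sq_ans R (2 ^ (2 * n))) (lbl n).

Definition Gw (R : realType) n (w : omega n) : seq (sq_query (2 ^ (2 * n))) -> lbl n -> R :=
  fun _ o => (o == istar w)%:R.

Lemma gen_case (R : realType) (lam : R) n (w : omega n) q
  (k : sq_ans R (2 ^ (2 * n)) -> algA R n) :
  Lq lam q (game_answer w (idx q)) = sq_oracle (Mmat lam w) (e1 R n) q ->
  (forall a h h', expect (k a) (sq_oracle (Mmat lam w) (e1 R n)) (Gw R w) h'
                  <= expect (sim lam (k a)) (game_oracle R w) (Fw R w) h) ->
  forall h h', expect (Ask q k) (sq_oracle (Mmat lam w) (e1 R n)) (Gw R w) h'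
     <= expect (Ask (idx q) (fun a => RndL (Lq lam q a) (AReal _ 0) (fun b => sim lam (k b))))
               (game_oracle R w) (Fw R w) h.
Proof.
move=> E IH h h'; rewrite [X in _ <= X]/= /game_oracle big_seq1 /= mul1r E.
by apply: (@expect_RndL R n w _ _ (AReal _ 0) _ (fun a => expect (k a) (sq_oracle (Mmat lam w) (e1 R n)) (Gw R w) (q :: h')) _); [apply: oracle_valid | move=> a; apply: IH].
Qed.

Lemma y_case (R : realType) (lam : R) n (w : omega n) q
  (k : sq_ans R (2 ^ (2 * n)) -> algA R n) :
  sq_oracle 0 (e1 R n) q = sq_oracle (Mmat lam w) (e1 R n) q ->
  (forall a h h', expect (k a) (sq_oracle (Mmat lam w) (e1 R n)) (Gw R w) h'
                  <= expect (sim lam (k a)) (game_oracle R w) (Fw R w) h) ->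
  forall h h', expect (Ask q k) (sq_oracle (Mmat lam w) (e1 R n)) (Gw R w) h'
     <= expect (RndL (sq_oracle 0 (e1 R n) q) (AReal _ 0) (fun b => sim lam (k b)))
               (game_oracle R w) (Fw R w) h.
Proof.
move=> E IH h h'; rewrite E /=.
by apply: (@expect_RndL R n w _ _ (AReal _ 0) _ (fun a => expect (k a) (sq_oracle (Mmat lam w) (e1 R n)) (Gw R w) (q :: h')) _); [apply: oracle_valid | move=> a; apply: IH].
Qed.

Lemma ns_case (R : realType) (lam : R) n (w : omega n) q
  (k : sq_ans R (2 ^ (2 * n)) -> algA R n) : (1 <= n)%N -> good w ->
  (forall a, valid_alg (k a)) ->
  sq_oracle (Mmat lam w) (e1 R n) q = sample_ans (fun i => fnorm (fun j => Mmat lam w i j)) ->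
  (forall a h h', expect (k a) (sq_oracle (Mmat lam w) (e1 R n)) (Gw R w) h'
                  <= expect (sim lam (k a)) (game_oracle R w) (Fw R w) h) ->
  forall h h', expect (Ask q k) (sq_oracle (Mmat lam w) (e1 R n)) (Gw R w) h'
     <= expect (Rnd (2 ^ (2 * n)) (@pf R lam n)
                  (fun s => Ask s (fun _ => sim lam (k (AIdx R s)))))
               (game_oracle R w) (Fw R w) h.
Proof.
move=> n1 g V E IH h h'; rewrite /= E (sum_sample _ (fun a => expect (k a) (sq_oracle (Mmat lam w) (e1 R n)) (Gw R w) (q :: h'))).
under [X in _ <= X]eq_bigr do rewrite /game_oracle big_seq1 /= mul1r.
have Z : fnorm (fun i : lbl n => fnorm (fun j => Mmat lam w i j)) ^+ 2 = Zf lam n - 1.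
  by rewrite fnorm_sq (rn_sum lam n1 g).
rewrite Z.
under [X in X <= _]eq_bigr do rewrite fnorm_sq rowsq //.
apply: (key_ineq (w := @wf R lam n)).
- by move=> i; have := wf_ge lam i; have := sqr_ge0 lam; lra.
- by move=> i; apply: IH.
- by move=> i; case/andP: (expB_bounds w (i :: h) (valid_sim lam (V (AIdx R i)))).
- by apply: expB_one; [apply: valid_sim | rewrite inE eqxx].
- move=> i; have := wf_ge lam i; have := sqr_ge0 lam.
  by case: (i == istar w) => /=; lra.
- exact: Zf_gt1.
Qed.

Definition Lq_prop (R : realType) (lam : R) n (w : omega n) (q : sq_query (2 ^ (2 * n))) : Prop :=
  match q with
  | Qy_entry _ | Qy_norm | Qy_sample | QM_rnorms_sample | QM_cnorms_sample => True
  | _ => Lq lam q (game_answer w (idx q)) = sq_oracle (Mmat lam w) (e1 R n) q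
  end.

Lemma Lq_ok (R : realType) (lam : R) n (w : omega n) q : (1 <= n)%N -> good w ->
  Lq_prop lam w q.
Proof.
move=> n1 g.
case: q => [i j|i|i|j|j|i| | |j| | |i| |] //=.
- by rewrite gvec_ok.
- by congr (det_ans _ _); apply: fnorm_ext => j; apply: gvec_ok.
- by apply: sample_ans_ext => j; apply: gvec_ok.
- by congr (det_ans _ _); apply: fnorm_ext => i; rewrite M_sym; apply: gvec_ok.
- by apply: sample_ans_ext => i; rewrite M_sym; apply: gvec_ok.
- by congr (det_ans _ _); apply: fnorm_ext => j; apply: gvec_ok.
- by rewrite rn_norm.
- by congr (det_ans _ _); apply: fnorm_ext => i; rewrite M_sym; apply: gvec_ok.
- rewrite -(rn_norm lam n1 g); congr (det_ans _ _); apply: fnorm_ext => j.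
  by apply: fnorm_ext => i; apply: M_sym.
Qed.

Lemma sim_ge (R : realType) (lam : R) n (w : omega n) (t : algA R n) :
  (1 <= n)%N -> good w -> valid_alg t ->
  forall h h', expect t (sq_oracle (Mmat lam w) (e1 R n)) (Gw R w) h'
               <= expect (sim lam t) (game_oracle R w) (Fw R w) h.
Proof.
move=> n1 g; elim: t => [o|q k IH|m p k IH] V h h'.
- rewrite /= /game_oracle big_seq1 /= mul1r /Fw /Gw mem_rev inE.
  by case: (o =P istar w) => [->|_]; rewrite ?eqxx //= ler0n.
- move: V => /= V; have IH' := fun a => IH a (V a).
  case: q IH' => [i j|i|i|j|j|i| | |j| | |i| |] IH'.
  - exact: (gen_case (Lq_ok lam (QM_entry i j) n1 g) IH' h h').
  - exact: (gen_case (Lq_ok lam (QM_row_norm i) n1 g) IH' h h').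
  - exact: (gen_case (Lq_ok lam (QM_row_sample i) n1 g) IH' h h').
  - exact: (gen_case (Lq_ok lam (QM_col_norm j) n1 g) IH' h h').
  - exact: (gen_case (Lq_ok lam (QM_col_sample j) n1 g) IH' h h').
  - exact: (gen_case (Lq_ok lam (QM_rnorms_entry i) n1 g) IH' h h').
  - exact: (gen_case (Lq_ok lam (@QM_rnorms_norm (2 ^ (2 * n))) n1 g) IH' h h').
  - exact: (@ns_case R lam n w (@QM_rnorms_sample _) k n1 g V (erefl _) IH' h h').
  - exact: (gen_case (Lq_ok lam (QM_cnorms_entry j) n1 g) IH' h h').
  - exact: (gen_case (Lq_ok lam (@QM_cnorms_norm (2 ^ (2 * n))) n1 g) IH' h h').
  - apply: (ns_case n1 g V _ IH' h h') => /=.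
    by apply: sample_ans_ext => j; apply: fnorm_ext => i; apply: M_sym.
  - exact: (@y_case R lam n w (Qy_entry i) k (erefl _) IH' h h').
  - exact: (@y_case R lam n w (@Qy_norm _) k (erefl _) IH' h h').
  - exact: (@y_case R lam n w (@Qy_sample _) k (erefl _) IH' h h').
- move: V => /= [p0 [ps V]]; apply: ler_sum => i _; apply: ler_wpM2l => //.
  by apply: IH.
Qed.

Lemma gen_qb (R : realType) (lam : R) n (w : omega n) q
  (k : sq_ans R (2 ^ (2 * n)) -> algA R n) b :
  Lq lam q (game_answer w (idx q)) = sq_oracle (Mmat lam w) (e1 R n) q ->
  is_M_query q = true ->
  (forall a b, qbound (k a) (sq_oracle (Mmat lam w) (e1 R n)) (@is_M_query _) b ->
     qbound (sim lam (k a)) (game_oracle R w) (fun _ => true) b.+1) ->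
  qbound (Ask q k) (sq_oracle (Mmat lam w) (e1 R n)) (@is_M_query _) b ->
  qbound (Ask (idx q) (fun a => RndL (Lq lam q a) (AReal _ 0) (fun b => sim lam (k b))))
    (game_oracle R w) (fun _ => true) b.+1.
Proof.
move=> E isM IH /= [b0 H]; rewrite isM in b0 H; split => // pa [<-|[]] _ /=.
apply: qbound_RndL => pa' Hin Hpos; rewrite E in Hin.
by have := IH _ _ (H pa' Hin Hpos); rewrite prednK.
Qed.

Lemma y_qb (R : realType) (lam : R) n (w : omega n) q
  (k : sq_ans R (2 ^ (2 * n)) -> algA R n) b :
  sq_oracle 0 (e1 R n) q = sq_oracle (Mmat lam w) (e1 R n) q ->
  is_M_query q = false ->
  (forall a b, qbound (k a) (sq_oracle (Mmat lam w) (e1 R n)) (@is_M_query _) b ->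
     qbound (sim lam (k a)) (game_oracle R w) (fun _ => true) b.+1) ->
  qbound (Ask q k) (sq_oracle (Mmat lam w) (e1 R n)) (@is_M_query _) b ->
  qbound (RndL (sq_oracle 0 (e1 R n) q) (AReal _ 0) (fun b => sim lam (k b)))
    (game_oracle R w) (fun _ => true) b.+1.
Proof.
move=> E nM IH /= [_ H]; rewrite nM in H.
apply: qbound_RndL => pa Hin Hpos; rewrite E in Hin.
by apply: IH; apply: H.
Qed.

Lemma ns_qb (R : realType) (lam : R) n (w : omega n) q
  (k : sq_ans R (2 ^ (2 * n)) -> algA R n) b : (1 <= n)%N -> good w ->
  sq_oracle (Mmat lam w) (e1 R n) q = sample_ans (fun i => fnorm (fun j => Mmat lam w i j)) ->
  is_M_query q = true ->
  (forall a b, qbound (k a) (sq_oracle (Mmat lam w) (e1 R n)) (@is_M_query _) b ->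
     qbound (sim lam (k a)) (game_oracle R w) (fun _ => true) b.+1) ->
  qbound (Ask q k) (sq_oracle (Mmat lam w) (e1 R n)) (@is_M_query _) b ->
  qbound (Rnd (2 ^ (2 * n)) (@pf R lam n)
                  (fun s => Ask s (fun _ => sim lam (k (AIdx R s)))))
    (game_oracle R w) (fun _ => true) b.+1.
Proof.
move=> n1 g E isM IH /= [b0 H]; rewrite isM in b0 H.
move=> s _; split => // pa [<-|[]] _ /=.
set v := (fun i : lbl n => fnorm (fun j => Mmat lam w i j)).
have Hin : List.In (AIdx R s, v s ^+ 2 / fnorm v ^+ 2) (sq_oracle (Mmat lam w) (e1 R n) q).
  rewrite E /sample_ans; apply: (In_map (fun i => (AIdx R i, v i ^+ 2 / fnorm v ^+ 2))).
  by apply: In_mem; rewrite mem_enum.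
have Hpos : 0 < (AIdx R s, v s ^+ 2 / fnorm v ^+ 2).2.
  have Z : fnorm v ^+ 2 = Zf lam n - 1 by rewrite fnorm_sq (rn_sum lam n1 g).
  have S : v s ^+ 2 = wf lam s - (s == istar w)%:R by rewrite /v fnorm_sq rowsq.
  rewrite /= Z S.
  have := wf_ge lam s; have := sqr_ge0 lam; have := Zf_gt1 lam n => z.
  by move=> l1 l2; apply: divr_gt0; [case: (s == istar w) => /=; lra | lra].
by have := IH _ _ (H _ Hin Hpos); rewrite prednK.
Qed.

Lemma sim_qbound (R : realType) (lam : R) n (w : omega n) (t : algA R n) :
  (1 <= n)%N -> good w -> forall b,
  qbound t (sq_oracle (Mmat lam w) (e1 R n)) (@is_M_query _) b ->
  qbound (sim lam t) (game_oracle R w) (fun _ => true) b.+1.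
Proof.
move=> n1 g; elim: t => [o|q k IH|m p k IH] b.
- by move=> _ /=; split => // pa [<-|[]] _.
- case: q IH => [i j|i|i|j|j|i| | |j| | |i| |] IH H.
  + exact: (gen_qb (Lq_ok lam (QM_entry i j) n1 g) erefl IH H).
  + exact: (gen_qb (Lq_ok lam (QM_row_norm i) n1 g) erefl IH H).
  + exact: (gen_qb (Lq_ok lam (QM_row_sample i) n1 g) erefl IH H).
  + exact: (gen_qb (Lq_ok lam (QM_col_norm j) n1 g) erefl IH H).
  + exact: (gen_qb (Lq_ok lam (QM_col_sample j) n1 g) erefl IH H).
  + exact: (gen_qb (Lq_ok lam (QM_rnorms_entry i) n1 g) erefl IH H).
  + exact: (gen_qb (Lq_ok lam (@QM_rnorms_norm (2 ^ (2 * n))) n1 g) erefl IH H).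
  + exact: (@ns_qb R lam n w (@QM_rnorms_sample _) k b n1 g (erefl _) erefl IH H).
  + exact: (gen_qb (Lq_ok lam (QM_cnorms_entry j) n1 g) erefl IH H).
  + exact: (gen_qb (Lq_ok lam (@QM_cnorms_norm (2 ^ (2 * n))) n1 g) erefl IH H).
  + apply: (@ns_qb R lam n w (@QM_cnorms_sample _) k b n1 g _ erefl IH H) => /=.
    by apply: sample_ans_ext => j; apply: fnorm_ext => i; apply: M_sym.
  + exact: (@y_qb R lam n w (Qy_entry i) k b (erefl _) erefl IH H).
  + exact: (@y_qb R lam n w (@Qy_norm _) k b (erefl _) erefl IH H).
  + exact: (@y_qb R lam n w (@Qy_sample _) k b (erefl _) erefl IH H).
- by move=> /= H i pi; apply: IH; apply: H.
Qed.
Unset Implicit Arguments.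

Theorem mainTheorem3 (R : realType) (n : nat) (lam eps : R) (T : nat)
    (A : alg R (sq_query (2 ^ (2 * n))) (sq_ans R (2 ^ (2 * n))) (lbl n))
    (xt : omega n -> 'cV[R]_(2 ^ (2 * n))) :
  (1 <= n)%N ->
  (forall w : omega n, good w -> \rank (Mmat lam w) = (2 ^ (2 * n))%N) ->
  0 < eps ->
  valid_alg A ->
  (forall w : omega n, good w ->
     qbound A (sq_oracle (Mmat lam w) (e1 R n)) (@is_M_query _) T) ->
  (forall w : omega n, good w ->
     vnorm (xt w - invmx (Mmat lam w) *m e1 R n)
       <= eps * vnorm (invmx (Mmat lam w) *m e1 R n)) ->
  (forall w : omega n, good w -> forall i : lbl n,
     out_prob A (Mmat lam w) (e1 R n) i = xt w i 0 ^+ 2 / vnorm (xt w) ^+ 2) ->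
  exists B : alg R (lbl n) (option {set lbl n}) unit,
    [/\ valid_alg B,
        (forall w : omega n, good w -> qbound B (game_oracle R w) (fun _ => true) T.+1) &
        win_prob B >= avg (fun w => xt w (istar w) 0 ^+ 2 / vnorm (xt w) ^+ 2)
                       - 2 * T%:R / (2 ^ (2 * n))%:R].
Proof.
move=> n1 rk eps0 VA QB approx outp.
exists (sim lam A); split.
- exact: valid_sim.
- by move=> w g; apply: sim_qbound n1 g T (QB w g).
- apply: (@le_trans _ _ (avg (fun w => xt w (istar w) 0 ^+ 2 / vnorm (xt w) ^+ 2))).
    by rewrite gerBl divr_ge0 // mulr_ge0 // ler0n.
  rewrite /win_prob /avg; apply: ler_wpM2r; first by rewrite invr_ge0 ler0n.
  apply: ler_sum => w g; rewrite -outp //.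
  exact: (sim_ge lam n1 g VA [::] [::]).
Qed.
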